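(* Let $\alpha\neq\beta$, let $(g_n)$ be as in the context, and set $w=\dfrac{\beta-x}{\beta-\alpha}$. Then for every $n\ge1$, $$g_n(x)=\frac1n\,[z^{n-1}]\;\frac{1}{(1-z)^2}\left(\frac{(\alpha-\beta)zw+\beta}{1-zw}\right)^{n},$$ where $[z^{m}]F(z)$ denotes the coefficient of $z^m$ in the power series expansion of $F$ in $z$.
   Context: Fix complex numbers $\alpha\neq\beta$. Define polynomials $g_n(x)\in\mathbb{C}[x]$ recursively by $g_0(x)=1$ and, for $n\ge1$, $$(x-\alpha)(\alpha-\beta)^{n-1}g_n(x)=\alpha(x-\beta)^n g_{n-1}(\alpha)-x(\alpha-\beta)^n g_{n-1}(x).$$ (The right-hand side vanishes at $x=\alpha$, so it is divisible by $x-\alpha$ and $g_n$ is a uniquely determined polynomial.) *)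

(* Defs.v *)
(* Formal power series over a field are represented by their
   coefficient sequences  nat -> K. *)
From HB Require Import structures.
From mathcomp Require Import all_boot all_order all_algebra.
Set Implicit Arguments. Unset Strict Implicit. Unset Printing Implicit Defensive.
Import Order.TTheory GRing.Theory Num.Theory.
Local Open Scope ring_scope.

Section FPS.
Variable K : fieldType.

Definition fps_mul (f g : nat -> K) : nat -> K :=
  fun n => \sum_(i < n.+1) f i * g (n - i)%N.

Definition fps_of_poly (p : {poly K}) : nat -> K := fun i => p`_i.

Fixpoint fps_inv_seq (f : nat -> K) (n : nat) : seq K :=
  match n with
  | 0 => [:: (f 0%N)^-1]
  | n'.+1 =>
      let s := fps_inv_seq f n' in
      rcons s (- (f 0%N)^-1 * \sum_(i < n'.+1) f i.+1 * nth 0 s (n' - i)%N)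
  end.

Definition fps_inv (f : nat -> K) : nat -> K := fun n => nth 0 (fps_inv_seq f n) n.

Definition coef_z (m : nat) (F : nat -> K) : K := F m.

End FPS.

(* Main.v *)
Require Import Defs.
From HB Require Import structures.
From mathcomp Require Import all_boot all_order all_algebra.
From mathcomp Require Import ring zify.
Import Order.TTheory GRing.Theory Num.Theory.
Local Open Scope ring_scope.


Set Implicit Arguments. Unset Strict Implicit.
Section Trunc.
Variable K : fieldType.
Implicit Types p q r s : {poly K}.

Definition eqN (N : nat) p q := forall k, (k <= N)%N -> p`_k = q`_k.

Lemma eqN_refl N p : eqN N p p. Proof. by []. Qed.
Lemma eqN_sym N p q : eqN N p q -> eqN N q p. Proof. by move=> h k hk; rewrite h. Qed.
Lemma eqN_trans N p q r : eqN N p q -> eqN N q r -> eqN N p r.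
Proof. by move=> h1 h2 k hk; rewrite h1 ?h2. Qed.
Lemma eqN_mul N p p' q q' : eqN N p p' -> eqN N q q' -> eqN N (p*q) (p'*q').
Proof.
move=> hp hq k hk; rewrite !coefM; apply: eq_bigr => i _.
have hi : (i <= N)%N by apply: leq_trans hk; rewrite -ltnS.
rewrite hp // hq //; apply: leq_trans hk; exact: leq_subr.
Qed.
Lemma eqN_exp N p q n : eqN N p q -> eqN N (p^+n) (q^+n).
Proof.
move=> h; elim: n => [|n IH]; first exact: eqN_refl.
rewrite !exprS; exact: eqN_mul.
Qed.

Definition tr N (u : nat -> K) : {poly K} := \poly_(i < N.+1) u i.
Lemma coef_tr N u k : (k <= N)%N -> (tr N u)`_k = u k.
Proof. by move=> hk; rewrite coef_poly ltnS hk. Qed.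

Lemma fps_mulE N u v k : (k <= N)%N -> fps_mul u v k = (tr N u * tr N v)`_k.
Proof.
move=> hk; rewrite coefM /fps_mul; apply: eq_bigr => i _.
have hi : (i <= N)%N by apply: leq_trans hk; rewrite -ltnS.
rewrite !coef_tr //; apply: leq_trans hk; exact: leq_subr.
Qed.

Lemma tr_mul N u v : eqN N (tr N (fps_mul u v)) (tr N u * tr N v).
Proof. by move=> k hk; rewrite coef_tr // (fps_mulE (N:=N)). Qed.

Lemma tr_poly N p : eqN N (tr N (fps_of_poly p)) p.
Proof. by move=> k hk; rewrite coef_tr. Qed.

Lemma size_inv_seq (f : nat -> K) n : size (fps_inv_seq f n) = n.+1.
Proof. by elim: n => [|n IH] //=; rewrite size_rcons IH. Qed.

Lemma nth_inv_seq (f : nat -> K) n k : (k <= n)%N -> nth 0 (fps_inv_seq f n) k = fps_inv f k.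
Proof.
elim: n k => [|n IH] k hk; first by case: k hk.
rewrite /= nth_rcons size_inv_seq; case: ltnP => h; first by rewrite IH.
have -> : k = n.+1 by apply/eqP; rewrite eqn_leq hk h.
by rewrite eqxx /fps_inv /= nth_rcons size_inv_seq ltnn eqxx.
Qed.

Lemma fps_invS (f : nat -> K) n : fps_inv f n.+1 =
  - (f 0%N)^-1 * \sum_(i < n.+1) f i.+1 * fps_inv f (n - i)%N.
Proof.
rewrite /fps_inv /= nth_rcons size_inv_seq ltnn eqxx; congr (_ * _).
by apply: eq_bigr => i _; rewrite nth_inv_seq // leq_subr.
Qed.

Lemma fps_inv_mul (f : nat -> K) : f 0%N != 0 -> forall k, fps_mul f (fps_inv f) k = (k == 0)%:R.
Proof.
move=> f0 [|n].
  by rewrite /fps_mul big_ord1 /fps_inv /= mulfV.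
rewrite /fps_mul big_ord_recl /= subn0 fps_invS mulrA mulrN mulfV // mulN1r.
under eq_bigr => i _ do rewrite /bump /= add1n subSS.
by rewrite addNr.
Qed.

Lemma eqN_inv_uniq N p r s : eqN N (p*r) 1 -> eqN N (p*s) 1 -> eqN N r s.
Proof.
move=> h1 h2; apply: (eqN_trans (q := r * (p * s))).
  rewrite -{1}(mulr1 r); apply: eqN_mul; [exact: eqN_refl | exact: eqN_sym].
rewrite mulrA [r * p]mulrC -{2}(mul1r s); apply: eqN_mul => //; exact: eqN_refl.
Qed.

Lemma tr_inv N p r : p`_0 != 0 -> eqN N (p*r) 1 ->
  eqN N (tr N (fps_inv (fps_of_poly p))) r.
Proof.
move=> p0 h; apply: (eqN_inv_uniq (p := p)) => // k hk.
rewrite (eqN_mul (eqN_sym (@tr_poly N p)) (@eqN_refl N (tr N (fps_inv (fps_of_poly p))))) //.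
by rewrite -fps_mulE // fps_inv_mul // coef1.
Qed.

Lemma geom N (a : K) : eqN N ((1 - a *: 'X) * \poly_(k < N.+1) a^+k) 1.
Proof.
move=> k hk; rewrite mulrBl mul1r -scalerAl coefB coefZ coefXM !coef_poly coef1.
case: k hk => [|k] hk /=; first by rewrite expr0 mulr0 subr0.
by rewrite ltnS hk ltnS (ltnW hk) exprS subrr.
Qed.

Lemma coef0X p n : (p^+n)`_0 = p`_0^+n.
Proof. by elim: n => [|n IH]; rewrite ?coef1 // !exprS coef0M IH. Qed.

End Trunc.


Section Main.
Variables (C : numClosedFieldType) (a b : C) (N : nat).
Implicit Types p q : {poly C}.

Definition Phi : {poly C} := \poly_(k < N.+1) (if k == 0%N then b else a).
Definition Dp p := 'X * p^`().

Lemma coef_Dp p k : (Dp p)`_k = k%:R * p`_k.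
Proof. by rewrite coefXM coef_deriv; case: k => [|k] /=; rewrite ?mul0r // mulr_natl. Qed.

Lemma Dp_exp p n : Dp (p ^+ n.+1) = n.+1%:R *: (p ^+ n * Dp p).
Proof. by rewrite /Dp deriv_exp scaler_nat mulrnAr /=; congr (_ *+ _); ring. Qed.

Definition A n := Phi ^+ n.
Definition B n := A n - (n%:R)^-1 *: Dp (A n).

Lemma coef_B n m : (B n)`_m = (1 - m%:R / n%:R) * (A n)`_m.
Proof. by rewrite coefB coefZ coef_Dp; ring. Qed.

Lemma B_simp n : B n.+1 = Phi ^+ n.+1 - Phi ^+ n * Dp Phi.
Proof. by rewrite /B /A Dp_exp scalerA mulVf ?scale1r // pnatr_eq0. Qed.

Lemma BS n : (1 < n)%N -> B n = Phi * B n.-1.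
Proof. by case: n => [|[|n]] // _; rewrite /= !B_simp !exprS; ring. Qed.

Lemma B_diag n : (0 < n)%N -> (B n)`_n = 0.
Proof. by move=> hn; rewrite coef_B divff ?subrr ?mul0r // pnatr_eq0 -lt0n. Qed.

Definition q n := \poly_(m < n) (B n)`_m.

Lemma q1 : q 1 = b%:P.
Proof.
apply/polyP => k; rewrite coef_poly coefC; case: k => [|k] //=.
by rewrite coef_B mul0r subr0 mul1r /A expr1 coef_poly.
Qed.

Definition xP : {poly C} := b%:P + (a - b) *: 'X.
Definition h n := xP * q n.
Definition s n := Phi * q n.

Lemma PhiX : eqN N ((1 - 'X) * Phi) xP.
Proof.
move=> k hk; rewrite mulrBl mul1r coefB coefXM !coef_poly coefD coefC coefZ coefX.
case: k hk => [|k] hk /=; first by rewrite subr0 mulr0 addr0.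
rewrite ltnS hk ltnS (ltnW hk); case: k hk => [|k] hk /=; first by rewrite mulr1 add0r.
by rewrite subrr mulr0 addr0.
Qed.

Lemma s_partial n k : (k <= N)%N -> (s n)`_k = \sum_(j < k.+1) (h n)`_j.
Proof.
have E : eqN N ((1 - 'X) * s n) (h n).
  by rewrite /s mulrA; apply: eqN_mul; [exact: PhiX | exact: eqN_refl].
elim: k => [|k IH] hk.
  by have := E 0%N hk; rewrite mulrBl mul1r coefB coefXM /= subr0 big_ord1 => ->.
have := E k.+1 hk; rewrite mulrBl mul1r coefB coefXM /= => H.
by rewrite big_ord_recr /= -IH ?(ltnW hk) // -H addrC subrK.
Qed.


Lemma q_coef n m : (1 < n)%N -> (m < n)%N -> (q n)`_m = (s n.-1)`_m.
Proof.
move=> hn hm; rewrite coef_poly hm BS // /s !coefM; apply: eq_bigr => [[i hi]] _ /=.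
congr (_ * _); rewrite coef_poly; case: ifP => // hj.
have -> : (m - i = n.-1)%N by lia.
by rewrite B_diag //; lia.
Qed.

Lemma size_xP : (size xP <= 2)%N.
Proof.
rewrite (leq_trans (size_polyD _ _)) // geq_max (leq_trans (size_polyC_leq1 _)) //.
by rewrite (leq_trans (size_scale_leq _ _)) // size_polyX.
Qed.

Lemma size_h n : (size (h n) <= n.+1)%N.
Proof.
rewrite (leq_trans (size_mul_leq _ _)) //.
have := size_xP; have := size_poly n (fun m => (B n)`_m); rewrite -/(q n); lia.
Qed.

Lemma xP1 : xP.[1] = a.
Proof. by rewrite /xP hornerD hornerC hornerZ hornerX mulr1 addrC subrK. Qed.

Lemma R n : (1 < n)%N -> (n <= N.+1)%N ->
  ('X - 1) * q n = a *: 'X^n * ((q n.-1).[1])%:P - h n.-1.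
Proof.
move=> hn hN; apply/polyP => k.
have hn0 : (0 < n)%N by lia.
have hN0 : (0 <= N)%N by [].
rewrite mulrBl mul1r !coefB coefXM coefMC coefZ coefXn.
have hsz := size_h n.-1; rewrite prednK in hsz => //.
case: k => [|k].
  rewrite eqxx q_coef // s_partial // big_ord1.
  by rewrite (_ : (0 == n)%N = false) ?mulr0 ?mul0r ?sub0r //; lia.
rewrite (_ : (k.+1 == 0)%N = false) //.
case: (ltngtP k.+1 n) => hk.
- rewrite !q_coef //; try lia.
  rewrite (s_partial _ (k := k.+1)); last by lia.
  rewrite big_ord_recr /= -s_partial; last by lia.
  by rewrite mulr0 mul0r sub0r opprD addrA subrr add0r.
- rewrite !coef_poly (_ : (k < n)%N = false); last by lia.
  rewrite (_ : (k.+1 < n)%N = false); last by lia.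
  rewrite (nth_default 0 (_ : (size (h n.-1) <= k.+1)%N)); last by lia.
  by rewrite subrr mulr0 mul0r subrr.
- subst n; rewrite /= q_coef //; change (k.+1.-1) with k in hsz |- *.
  rewrite coef_poly ltnn subr0 s_partial; last by lia.
  rewrite (nth_default 0 hsz) subr0.
  have -> : a * 1 * (q k).[1] = (h k).[1] by rewrite /h hornerM xP1 mulr1.
  rewrite (horner_coef_wide _ hsz).
  by apply: eq_bigr => i _; rewrite expr1n mulr1.
Qed.


Definition W : {poly C} := (a - b)^-1 *: ('X - b%:P).

Section WithHab.
Hypothesis hab : a != b.
Let hd : a - b != 0. Proof. by rewrite subr_eq0. Qed.

Lemma xPW : xP \Po W = 'X.
Proof.
rewrite /xP comp_polyD comp_polyC comp_polyZ comp_polyX /W scalerA mulfV //.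
by rewrite scale1r addrC subrK.
Qed.

Lemma WX : (a - b) *: W = 'X - b%:P.
Proof. by rewrite /W scalerA mulfV // scale1r. Qed.

Lemma WX1 : (a - b) *: (W - 1) = 'X - a%:P.
Proof. by rewrite scalerBr WX alg_polyC polyCB; ring. Qed.

Lemma W_a : W.[a] = 1.
Proof. by rewrite /W hornerZ hornerXsubC mulVf. Qed.

Lemma gQ (g : nat -> {poly C}) : g 0%N = 1 ->
  (forall n : nat, (0 < n)%N ->
     ('X - a%:P) * ((a - b) ^+ n.-1)%:P * g n =
     a *: ('X - b%:P) ^+ n * ((g n.-1).[a])%:P
     - 'X * ((a - b) ^+ n)%:P * g n.-1) ->
  forall n, (0 < n)%N -> (n <= N.+1)%N -> g n = q n \Po W.
Proof.
move=> hg0 hrec; elim=> [//|n IH] _ hn.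
have hX : 'X - a%:P != 0 by rewrite polyXsubC_eq0.
case: n IH hn => [|n] IH hn.
  have := hrec 1%N isT; rewrite /= hg0 hornerC !expr0 !expr1 polyC1 !mulr1 q1 comp_polyC.
  have -> : a *: ('X - b%:P) - 'X * (a - b)%:P = ('X - a%:P) * b%:P.
    by rewrite -mul_polyC polyCB; ring.
  by move/(mulfI hX).
have IHn := IH isT (ltnW hn).
have E := congr1 (comp_poly W) (R (n := n.+2) isT hn).
have e1 : (1 : {poly C}) \Po W = 1 by rewrite -polyC1 comp_polyC.
rewrite /= /h comp_polyM !comp_polyB !comp_polyM e1 comp_polyX comp_polyZ rmorphXn /= comp_polyX comp_polyC xPW -IHn in E.
have hc : (g n.+1).[a] = (q n.+1).[1] by rewrite IHn horner_comp W_a.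
have := hrec n.+2 isT; rewrite /= hc.
have hc0 : ('X - a%:P) * ((a - b) ^+ n.+1)%:P != 0.
  by rewrite mulf_neq0 // polyC_eq0 expf_neq0.
move=> H; apply: (mulfI hc0); rewrite H IHn.
rewrite -WX1 -WX -!mul_polyC in E *.
rewrite !rmorphXn /=.
have -> : (a - b)%:P * (W - 1) * (a - b)%:P ^+ n.+1 * (q n.+2 \Po W) =
   (a - b)%:P ^+ n.+2 * ((W - 1) * (q n.+2 \Po W)) by rewrite !exprS; ring.
rewrite E IHn.
move: (q n.+1 \Po W : {poly C}) => Q. move: ((q n.+1).[1])%:P W (a - b)%:P a%:P => c V d a0; rewrite !exprS exprMn; ring.
Qed.

End WithHab.

End Main.

Set Implicit Arguments. Unset Strict Implicit.

Section Sc.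
Variable K : fieldType.
Definition sc (c : K) (p : {poly K}) := \poly_(k < size p) (c ^+ k * p`_k).
Lemma coef_sc c p k : (sc c p)`_k = c ^+ k * p`_k.
Proof. by rewrite coef_poly; case: ltnP => // h; rewrite nth_default // mulr0. Qed.
Lemma sc_mul c p q : sc c (p * q) = sc c p * sc c q.
Proof.
apply/polyP => k; rewrite coef_sc !coefM mulr_sumr; apply: eq_bigr => -[i hi] _ /=.
rewrite !coef_sc; have hik : (i <= k)%N by rewrite -ltnS.
by rewrite -{1}(subnKC hik) exprD; ring.
Qed.
Lemma sc1 c : sc c 1 = 1.
Proof. by apply/polyP => k; rewrite coef_sc coef1; case: k => [|k]; rewrite ?expr0 ?mul1r ?mulr0. Qed.
Lemma sc_exp c p n : sc c (p ^+ n) = (sc c p) ^+ n.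
Proof. by elim: n => [|n IH]; rewrite ?sc1 // !exprS sc_mul IH. Qed.
End Sc.

Unset Implicit Arguments. Set Strict Implicit.

Theorem mainTheorem5 (C : numClosedFieldType) (alpha beta : C)
  (g : nat -> {poly C}) :
  alpha != beta ->
  g 0%N = 1 ->
  (forall n : nat, (0 < n)%N ->
     ('X - alpha%:P) * ((alpha - beta) ^+ n.-1)%:P * g n =
     alpha *: ('X - beta%:P) ^+ n * ((g n.-1).[alpha])%:P
     - 'X * ((alpha - beta) ^+ n)%:P * g n.-1) ->
  forall (n : nat) (x : C), (0 < n)%N ->
  let w := (beta - x) / (beta - alpha) in
  (g n).[x] =
    n%:R^-1 *
    coef_z n.-1
      (fps_mul (fps_inv (fps_of_poly ((1 - 'X) ^+ 2)))
         (fps_mul (fps_of_poly ((((alpha - beta) * w) *: 'X + beta%:P) ^+ n))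
                  (fps_inv (fps_of_poly ((1 - w *: 'X) ^+ n))))).
Proof.
move=> hab hg0 hrec n x hn w.
have hd : alpha - beta != 0 by rewrite subr_eq0.
have hN : (n <= n.+1)%N by [].
rewrite (gQ (N := n) hab hg0 hrec hn hN) horner_comp.
have -> : (W alpha beta).[x] = w.
  rewrite /W hornerZ hornerXsubC /w -[beta - x]opprB -[beta - alpha]opprB invrN mulrNN.
  by rewrite mulrC.
rewrite horner_poly.
set I2 := fps_inv (fps_of_poly ((1 - 'X) ^+ 2)).
set E := fps_mul (fps_of_poly _) _.
have hI2 : forall i, (i <= n)%N -> I2 i = i.+1%:R.
  move=> i hi.
  set G1 := \poly_(k < n.+1) (1 : C) ^+ k.
  have H1 : eqN n (tr n I2) (G1 ^+ 2).
    apply: tr_inv.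
      by rewrite coef0X coefB coef1 coefX subr0 expr1n oner_neq0.
    rewrite -exprMn -[in X in (_ - X)](scale1r 'X).
    by have := eqN_exp 2 (@geom _ n (1 : C)); rewrite expr1n.
  rewrite -(coef_tr I2 hi) H1 //.
  rewrite expr2 coefM (eq_bigr (fun _ => 1)) ?sumr_const ?card_ord //.
  move=> [j hj] _ /=; rewrite !coef_poly !expr1n.
  have h1 : (j < n.+1)%N by lia.
  have h2 : (i - j < n.+1)%N by lia.
  by rewrite h1 h2 mulr1.
set Gw := \poly_(k < n.+1) w ^+ k.
set P := ((alpha - beta) * w) *: 'X + beta%:P.
have H2 : eqN n (tr n (fps_inv (fps_of_poly ((1 - w *: 'X) ^+ n)))) (Gw ^+ n).
  apply: tr_inv.
    by rewrite coef0X coefB coef1 coefZ coefX mulr0 subr0 expr1n oner_neq0.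
  rewrite -exprMn.
  by have := eqN_exp n (@geom _ n w); rewrite expr1n.
have H3 : eqN n (P * Gw) (sc w (Phi alpha beta n)).
  move=> k hk; rewrite mulrDl -scalerAl coefD coefZ coefXM coefCM coef_sc !coef_poly.
  case: k hk => [|k] hk /=; first by rewrite mulr0 add0r expr0 mulr1 mul1r.
  have h1 : (k < n.+1)%N by lia.
  rewrite h1 ltnS hk exprS; ring.
have HE : eqN n (tr n E) (sc w (A alpha beta n n)).
  apply: (eqN_trans (q := tr n (fps_of_poly (P ^+ n)) *
     tr n (fps_inv (fps_of_poly ((1 - w *: 'X) ^+ n))))); first exact: tr_mul.
  apply: (eqN_trans (q := P ^+ n * Gw ^+ n)); first by apply: eqN_mul H2; exact: tr_poly.
  rewrite -exprMn /A sc_exp; exact: eqN_exp.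
have hE : forall j, (j <= n)%N -> E j = w ^+ j * (A alpha beta n n)`_j.
  by move=> j hj; rewrite -(coef_tr E hj) HE // coef_sc.
rewrite /coef_z /fps_mul prednK // mulr_sumr [RHS](reindex_inj rev_ord_inj) /=.
apply: eq_bigr => -[m hm] _ /=.
rewrite (_ : (n.-1 - (n - m.+1))%N = m); last by lia.
rewrite hI2; last by lia.
rewrite hE; last by lia.
rewrite coef_B (_ : (n - m.+1).+1 = n - m)%N; last by lia.
rewrite natrB; last by lia.
have hn0 : n%:R != 0 :> C by rewrite pnatr_eq0 -lt0n.
by field.
Qed.
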